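(* Let $X,Y$ be nonempty compact Hausdorff spaces, $E\neq\{0_E\}$ a complex locally convex space, and $T:C(X,E)\to C(Y,E)$ a map with $\operatorname{Ran}(TF-TG)\subset\operatorname{Ran}(F-G)$ for all $F,G\in C(X,E)$ and $T(1\otimes 0_E)=1\otimes 0_E$. Then for each $u\in E\setminus\{0_E\}$ there exists a continuous map $\varphi_u:Y\to X$ such that $\tilde T_u f=f\circ\varphi_u$ for all $f\in C(X)$; in particular $\tilde T_u$ is linear.
   Context: $C(X,E)$ is the vector space of continuous functions $X\to E$; $\operatorname{Ran}(F)=\{F(x):x\in X\}$; $f\otimes u$ denotes $x\mapsto f(x)u$, and $1\otimes 0_E$ is the constant function $0_E$. For $u\in E\setminus\{0_E\}$ and $f\in C(X)$, $\tilde T_u f\in C(Y)$ is the unique function $Y\to\mathbb{C}$ with $T(f\otimes u)(y)=(\tilde T_uf)(y)u$ for all $y\in Y$. *)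

(* Defs.v *)
From Stdlib Require Import Reals List.
Open Scope R_scope.

Record Cplx := mkC { Cre : R; Cim : R }.
Definition Cadd (z w : Cplx) : Cplx := mkC (Cre z + Cre w) (Cim z + Cim w).
Definition Copp (z : Cplx) : Cplx := mkC (- Cre z) (- Cim z).
Definition Cmul (z w : Cplx) : Cplx :=
  mkC (Cre z * Cre w - Cim z * Cim w) (Cre z * Cim w + Cim z * Cre w).
Definition C0 : Cplx := mkC 0 0.
Definition C1 : Cplx := mkC 1 0.
Definition Cnorm (z : Cplx) : R := sqrt (Cre z * Cre z + Cim z * Cim z).

Definition C_open (S : Cplx -> Prop) : Prop :=
  forall z, S z -> exists eps, 0 < eps /\
    forall w, Cnorm (Cadd w (Copp z)) < eps -> S w.

Record TopSpace := {
  pt :> Type;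
  is_open : (pt -> Prop) -> Prop;
  open_full : is_open (fun _ => True);
  open_inter : forall U V, is_open U -> is_open V ->
                 is_open (fun x => U x /\ V x);
  open_union : forall (I : Type) (U : I -> pt -> Prop),
                 (forall i, is_open (U i)) -> is_open (fun x => exists i, U i x)
}.

Definition compact_space (X : TopSpace) : Prop :=
  forall (I : Type) (U : I -> X -> Prop),
    (forall i, is_open X (U i)) -> (forall x, exists i, U i x) ->
    exists l : list I, forall x, exists i, In i l /\ U i x.

Definition hausdorff_space (X : TopSpace) : Prop :=
  forall x y : X, x <> y -> exists U V : X -> Prop,
    is_open X U /\ is_open X V /\ U x /\ V y /\ (forall z, ~ (U z /\ V z)).

Definition continuous_wrt {A B : Type} (openA : (A -> Prop) -> Prop)
  (openB : (B -> Prop) -> Prop) (f : A -> B) : Prop :=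
  forall V, openB V -> openA (fun x => V (f x)).

Record LCS := {
  vec :> Type;
  v0 : vec;
  vadd : vec -> vec -> vec;
  vopp : vec -> vec;
  vscale : Cplx -> vec -> vec;
  vaddA : forall x y z, vadd x (vadd y z) = vadd (vadd x y) z;
  vaddC : forall x y, vadd x y = vadd y x;
  vadd0 : forall x, vadd x v0 = x;
  vaddN : forall x, vadd x (vopp x) = v0;
  vscaleA : forall a b x, vscale a (vscale b x) = vscale (Cmul a b) x;
  vscale1 : forall x, vscale C1 x = x;
  vscaleDr : forall a x y, vscale a (vadd x y) = vadd (vscale a x) (vscale a y);
  vscaleDl : forall a b x, vscale (Cadd a b) x = vadd (vscale a x) (vscale b x);
  sn_index : Type;
  sn : sn_index -> vec -> R;
  sn_triangle : forall i x y, sn i (vadd x y) <= sn i x + sn i y;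
  sn_homog : forall i a x, sn i (vscale a x) = Cnorm a * sn i x;
  sn_separating : forall x, (forall i, sn i x = 0) -> x = v0
}.

Definition vsub (E : LCS) (x y : E) : E := vadd E x (vopp E y).

Definition E_open (E : LCS) (S : E -> Prop) : Prop :=
  forall x, S x -> exists (l : list (sn_index E)) (eps : R), 0 < eps /\
    forall y, (forall i, In i l -> sn E i (vsub E y x) < eps) -> S y.

Definition contE (X : TopSpace) (E : LCS) (F : X -> E) : Prop :=
  continuous_wrt (is_open X) (E_open E) F.
Definition CXE (X : TopSpace) (E : LCS) := { F : X -> E | contE X E F }.
Definition contC (X : TopSpace) (f : X -> Cplx) : Prop :=
  continuous_wrt (is_open X) C_open f.
Definition contXY (X Y : TopSpace) (phi : Y -> X) : Prop :=
  continuous_wrt (is_open Y) (is_open X) phi.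

(* Main.v *)
From Stdlib Require Import Reals List Lra Lia Classical ClassicalEpsilon FunctionalExtensionality PropExtensionality.
Require Import Defs.
Open Scope R_scope.

Lemma pred_ext {A : Type} (P Q : A -> Prop) : (forall x, P x <-> Q x) -> P = Q.
Proof. intros H; apply functional_extensionality; intros x; apply propositional_extensionality; auto. Qed.

Lemma open_ext (X : TopSpace) (P Q : X -> Prop) : (forall x, P x <-> Q x) -> is_open X P -> is_open X Q.
Proof. intros H; rewrite (pred_ext P Q H); auto. Qed.

Lemma open_nbhd (X : TopSpace) (P : X -> Prop) :
  (forall x, P x -> exists U, is_open X U /\ U x /\ forall z, U z -> P z) -> is_open X P.
Proof.
  intros H.
  set (I := {U : X -> Prop | is_open X U /\ forall z, U z -> P z}).
  apply (open_ext X (fun x => exists i : I, proj1_sig i x)).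
  - intros x; split.
    + intros [i Hx]. destruct i as [U [HU1 HU2]]; simpl in Hx; auto.
    + intros Px. destruct (H x Px) as [U [HU [Ux HUP]]].
      exists (exist _ U (conj HU HUP)); simpl; auto.
  - apply open_union. intros i; destruct i as [U [HU HU2]]; simpl; exact HU.
Qed.

Lemma open_empty (X : TopSpace) : is_open X (fun _ => False).
Proof.
  apply (open_ext X (fun x => exists i : False, (fun (i:False) (_:X) => True) i x)).
  - intros x; split; [intros [[] _] | intros []].
  - apply open_union; intros [].
Qed.

Lemma open_union2 (X : TopSpace) (U V : X -> Prop) : is_open X U -> is_open X V ->
  is_open X (fun x => U x \/ V x).
Proof.
  intros HU HV.
  apply (open_ext X (fun x => exists b : bool, (fun (b:bool) x => if b then U x else V x) b x)).
  - intros x; split.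
    + intros [[|] H]; auto.
    + intros [H|H]; [exists true | exists false]; auto.
  - apply open_union; intros [|]; auto.
Qed.

Lemma open_list_inter (X : TopSpace) {I : Type} (W : I -> X -> Prop) (l : list I) :
  (forall i, is_open X (W i)) -> is_open X (fun x => forall i, In i l -> W i x).
Proof.
  intros HW; induction l as [|a l IH].
  - apply (open_ext X (fun _ => True)); [|apply open_full].
    intros x; split; [intros _ i [] | auto].
  - apply (open_ext X (fun x => W a x /\ (forall i, In i l -> W i x))).
    + intros x; split.
      * intros [H1 H2] i [<-|Hi]; auto.
      * intros H; split; [apply H; left; auto | intros i Hi; apply H; right; auto].
    + apply open_inter; auto.
Qed.

Definition closed (X : TopSpace) (K : X -> Prop) := is_open X (fun x => ~ K x).

Lemma closed_compl (X : TopSpace) (U : X -> Prop) : is_open X U -> closed X (fun x => ~ U x).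
Proof.
  intros H; unfold closed. apply (open_ext X U); auto.
  intros x; split; [auto | apply NNPP].
Qed.

Section Sep.
Variable X : TopSpace.
Hypothesis hc : compact_space X.

Definition SepT (B : X -> Prop) := {p : (X -> Prop) * (X -> Prop) |
   is_open X (fst p) /\ is_open X (snd p) /\ (forall z, B z -> snd p z) /\
   (forall z, ~ (fst p z /\ snd p z))}.

Lemma sep_compact (A B : X -> Prop) : closed X A ->
  (forall a, A a -> exists U V, is_open X U /\ is_open X V /\ U a /\
      (forall z, B z -> V z) /\ (forall z, ~ (U z /\ V z))) ->
  exists O P, is_open X O /\ is_open X P /\ (forall z, A z -> O z) /\
      (forall z, B z -> P z) /\ (forall z, ~ (O z /\ P z)).
Proof.
  intros hA H.
  set (cov := fun (i : option (SepT B)) (x : X) =>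
         match i with Some p => fst (proj1_sig p) x | None => ~ A x end).
  destruct (hc (option (SepT B)) cov) as [l Hl].
  - intros [p|]; simpl. destruct p as [p [h1 hh]]; exact h1. exact hA.
  - intros x. destruct (classic (A x)) as [Ax|nAx].
    + destruct (H x Ax) as [U [V [h1 [h2 [h3 [h4 h5]]]]]].
      exists (Some (exist _ (U, V) (conj h1 (conj h2 (conj h4 h5))))). simpl. exact h3.
    + exists None; exact nAx.
  - set (W := fun (i : option (SepT B)) (x : X) =>
         match i with Some p => snd (proj1_sig p) x | None => True end).
    exists (fun x => exists p, In (Some p) l /\ fst (proj1_sig p) x).
    exists (fun x => forall i, In i l -> W i x).
    split; [|split; [|split; [|split]]].
    + set (J := {p : SepT B | In (Some p) l}).
      apply (open_ext X (fun x => exists j : J, fst (proj1_sig (proj1_sig j)) x)).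
      * intros x; split.
        -- intros [[p Hp] Hx]; exists p; auto.
        -- intros [p [Hp Hx]]; exists (exist _ p Hp); auto.
      * apply open_union. intros [p Hp]; simpl. destruct p as [p [h1 hh]]; exact h1.
    + apply open_list_inter. intros [p|]; simpl.
      * destruct p as [p [h1 [h2 hh]]]; exact h2.
      * apply open_full.
    + intros z Az. destruct (Hl z) as [[p|] [Hin Hc]]; simpl in Hc.
      * exists p; auto.
      * contradiction.
    + intros z Bz [p|] _; simpl; auto.
      destruct p as [p [h1 [h2 [h3 hh]]]]; simpl; auto.
    + intros z [[p [Hp Hz]] HP].
      specialize (HP (Some p) Hp). simpl in HP.
      destruct p as [p [h1 [h2 [h3 h4]]]]; simpl in *. apply (h4 z); auto.
Qed.
End Sep.

Section Normal.
Variable X : TopSpace.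
Hypothesis hc : compact_space X.
Hypothesis hh : hausdorff_space X.

Lemma regular_sep (B : X -> Prop) (x : X) : closed X B -> ~ B x ->
  exists U V, is_open X U /\ is_open X V /\ U x /\ (forall z, B z -> V z) /\
    (forall z, ~ (U z /\ V z)).
Proof.
  intros hB nBx.
  destruct (sep_compact X hc B (fun z => z = x) hB) as [O [P [h1 [h2 [h3 [h4 h5]]]]]].
  - intros a Ba. assert (a <> x) by (intros ->; auto).
    destruct (hh a x H) as [U [V [u1 [u2 [u3 [u4 u5]]]]]].
    exists U, V; repeat split; auto. intros z ->; auto.
  - exists P, O; repeat split; auto. intros z [Hz1 Hz2]; apply (h5 z); auto.
Qed.

Lemma normal_sep (A B : X -> Prop) : closed X A -> closed X B -> (forall z, ~ (A z /\ B z)) ->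
  exists O P, is_open X O /\ is_open X P /\ (forall z, A z -> O z) /\
      (forall z, B z -> P z) /\ (forall z, ~ (O z /\ P z)).
Proof.
  intros hA hB hAB. apply sep_compact; auto.
  intros a Aa. apply regular_sep; auto. intros Ba; apply (hAB a); auto.
Qed.

Lemma mid_exists (K O : X -> Prop) : closed X K -> is_open X O -> (forall z, K z -> O z) ->
  exists O' K', is_open X O' /\ closed X K' /\ (forall z, K z -> O' z) /\
    (forall z, O' z -> K' z) /\ (forall z, K' z -> O z).
Proof.
  intros hK hO hKO.
  destruct (normal_sep K (fun z => ~ O z) hK (closed_compl X O hO)) as [P [Q [h1 [h2 [h3 [h4 h5]]]]]].
  - intros z [Kz nOz]; auto.
  - exists P, (fun z => ~ Q z); repeat split; auto.
    + apply closed_compl; auto.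
    + intros z Pz Qz; apply (h5 z); auto.
    + intros z nQz. apply NNPP; intros nOz; auto.
Qed.
End Normal.

Definition contR (X : TopSpace) (r : X -> R) : Prop :=
  forall x eps, 0 < eps -> exists U, is_open X U /\ U x /\ forall z, U z -> Rabs (r z - r x) < eps.

Lemma exists_least (P : nat -> Prop) n : P n -> exists k, P k /\ forall j, (j < k)%nat -> ~ P j.
Proof.
  revert P. induction n as [n IH] using (well_founded_induction Wf_nat.lt_wf). intros P Pn.
  destruct (classic (exists j, (j < n)%nat /\ P j)) as [[j [Hj Pj]]|H].
  - apply (IH j Hj P Pj).
  - exists n; split; auto. intros j Hj Pj; apply H; eauto.
Qed.

Section Urysohn.
Variable X : TopSpace.
Hypothesis hc : compact_space X.
Hypothesis hh : hausdorff_space X.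
Variable x0 : X.
Variable V : X -> Prop.
Hypothesis hV : is_open X V.
Hypothesis Vx0 : V x0.

Definition midP (K O : X -> Prop) (p : (X -> Prop) * (X -> Prop)) :=
  is_open X (fst p) /\ closed X (snd p) /\ (forall z, K z -> fst p z) /\
    (forall z, fst p z -> snd p z) /\ (forall z, snd p z -> O z).

Definition midf (K O : X -> Prop) := epsilon (inhabits (K, O)) (midP K O).

Lemma midf_spec K O : closed X K -> is_open X O -> (forall z, K z -> O z) -> midP K O (midf K O).
Proof.
  intros h1 h2 h3. unfold midf. apply epsilon_spec.
  destruct (mid_exists X hc hh K O h1 h2 h3) as [O' [K' H]]. exists (O', K'); exact H.
Qed.

Lemma single_closed : closed X (fun z => z = x0).
Proof.
  unfold closed. apply open_nbhd. intros z Hz.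
  destruct (hh z x0 Hz) as [U [W [h1 [h2 [h3 [h4 h5]]]]]].
  exists U; repeat split; auto. intros w Uw ->. apply (h5 x0); auto.
Qed.

Definition p1 := midf (fun z => z = x0) V.
Definition p0 := midf (fun z => z = x0) (fst p1).

Lemma p1_spec : midP (fun z => z = x0) V p1.
Proof. apply midf_spec; auto using single_closed. intros z ->; auto. Qed.

Lemma p0_spec : midP (fun z => z = x0) (fst p1) p0.
Proof.
  destruct p1_spec as [h1 [h2 [h3 [h4 h5]]]].
  apply midf_spec; auto using single_closed.
Qed.

Fixpoint lev (n k : nat) : (X -> Prop) * (X -> Prop) :=
  match n with
  | O => match k with O => p0 | _ => p1 end
  | S n' => if Nat.even k then lev n' (Nat.div2 k)
            else midf (snd (lev n' (Nat.div2 k))) (fst (lev n' (S (Nat.div2 k))))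
  end.

Definition Op n k := fst (lev n k).
Definition Kc n k := snd (lev n k).

Lemma lev_S n k : lev (S n) k = if Nat.even k then lev n (Nat.div2 k)
            else midf (snd (lev n (Nat.div2 k))) (fst (lev n (S (Nat.div2 k)))).
Proof. reflexivity. Qed.

Lemma lev_even n m : lev (S n) (2 * m) = lev n m.
Proof. rewrite lev_S. rewrite Nat.even_even, Nat.div2_double. reflexivity. Qed.

Lemma lev_odd n m : lev (S n) (2 * m + 1) = midf (Kc n m) (Op n (S m)).
Proof.
  rewrite lev_S, Nat.even_odd. replace (2 * m + 1)%nat with (S (2 * m)) by lia.
  rewrite Nat.div2_succ_double. reflexivity.
Qed.

Definition Inv n :=
  (forall k, (k <= 2 ^ n)%nat -> is_open X (Op n k) /\ closed X (Kc n k) /\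
       (forall z, Op n k z -> Kc n k z)) /\
  (forall k, (k < 2 ^ n)%nat -> forall z, Kc n k z -> Op n (S k) z).

Lemma Inv_all n : Inv n.
Proof.
  induction n as [|n [IH1 IH2]].
  - destruct p0_spec as [a1 [a2 [a3 [a4 a5]]]].
    destruct p1_spec as [b1 [b2 [b3 [b4 b5]]]].
    split.
    + intros k Hk. unfold Op, Kc. destruct k as [|[|k]]; simpl in *; try lia; auto.
    + intros k Hk. unfold Op, Kc. destruct k as [|k]; simpl in *; try lia; auto.
  - split.
    + intros k Hk. destruct (Nat.Even_or_Odd k) as [[m ->]|[m ->]].
      * unfold Op, Kc. rewrite lev_even. apply IH1. simpl in Hk. lia.
      * unfold Op, Kc. rewrite lev_odd. simpl in Hk.
        assert (Hm : (m < 2 ^ n)%nat) by lia.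
        destruct (IH1 m ltac:(lia)) as [c1 [c2 c3]].
        destruct (IH1 (S m) ltac:(lia)) as [d1 [d2 d3]].
        destruct (midf_spec (Kc n m) (Op n (S m)) c2 d1 (IH2 m Hm)) as [e1 [e2 [e3 [e4 e5]]]].
        auto.
    + intros k Hk z. destruct (Nat.Even_or_Odd k) as [[m ->]|[m ->]]; simpl in Hk.
      * assert (Hm : (m < 2 ^ n)%nat) by lia.
        unfold Op, Kc. replace (S (2 * m)) with (2 * m + 1)%nat by lia.
        rewrite lev_even, lev_odd.
        destruct (IH1 m ltac:(lia)) as [c1 [c2 c3]].
        destruct (IH1 (S m) ltac:(lia)) as [d1 [d2 d3]].
        destruct (midf_spec (Kc n m) (Op n (S m)) c2 d1 (IH2 m Hm)) as [e1 [e2 [e3 [e4 e5]]]].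
        apply e3.
      * assert (Hm : (m < 2 ^ n)%nat) by lia.
        unfold Op, Kc. replace (S (2 * m + 1)) with (2 * (S m))%nat by lia.
        rewrite lev_even, lev_odd.
        destruct (IH1 m ltac:(lia)) as [c1 [c2 c3]].
        destruct (IH1 (S m) ltac:(lia)) as [d1 [d2 d3]].
        destruct (midf_spec (Kc n m) (Op n (S m)) c2 d1 (IH2 m Hm)) as [e1 [e2 [e3 [e4 e5]]]].
        apply e5.
Qed.

Lemma lev_scale n p k : lev (n + p) (k * 2 ^ p) = lev n k.
Proof.
  induction p as [|p IH].
  - rewrite Nat.add_0_r, Nat.pow_0_r, Nat.mul_1_r; reflexivity.
  - replace (n + S p)%nat with (S (n + p)) by lia.
    replace (k * 2 ^ S p)%nat with (2 * (k * 2 ^ p))%nat by (simpl; lia).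
    rewrite lev_even; exact IH.
Qed.

Lemma mono1 n i j : (i < j)%nat -> (j <= 2 ^ n)%nat -> forall z, Kc n i z -> Op n j z.
Proof.
  destruct (Inv_all n) as [H1 H2].
  induction j as [|j IH]; intros Hij Hj z Hz; [lia|].
  destruct (Nat.eq_dec i j) as [->|Hne].
  - apply H2; auto; lia.
  - apply H2; [lia|]. destruct (H1 j ltac:(lia)) as [_ [_ H3]]. apply H3, IH; auto; lia.
Qed.

Lemma mono2 n i j : (i <= j)%nat -> (j <= 2 ^ n)%nat -> forall z, Op n i z -> Kc n j z.
Proof.
  intros Hij Hj z Hz. destruct (Inv_all n) as [H1 H2].
  destruct (Nat.eq_dec i j) as [->|Hne].
  - destruct (H1 j Hj) as [_ [_ H3]]; auto.
  - destruct (H1 j Hj) as [_ [_ H3]]. apply H3. apply (mono1 n i j); [lia|auto|].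
    destruct (H1 i ltac:(lia)) as [_ [_ H4]]; auto.
Qed.

Lemma cmp n k m j : (k <= 2 ^ n)%nat -> (j <= 2 ^ m)%nat -> (k * 2 ^ m <= j * 2 ^ n)%nat ->
  forall z, Op n k z -> Kc m j z.
Proof.
  intros Hk Hj Hkj z Hz.
  unfold Op, Kc in *.
  rewrite <- (lev_scale n m k) in Hz. rewrite <- (lev_scale m n j).
  rewrite (Nat.add_comm m n).
  assert (2 ^ (n + m) = 2 ^ n * 2 ^ m)%nat by apply Nat.pow_add_r.
  apply (mono2 (n + m) (k * 2 ^ m) (j * 2 ^ n)); auto.
  rewrite H. apply Nat.mul_le_mono_l with (p := (2 ^ n)%nat) in Hj. nia.
Qed.

Lemma pow2_pos n : 0 < 2 ^ n.
Proof. apply pow_lt; lra. Qed.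

Lemma INR_pow2 n : INR (2 ^ n) = 2 ^ n.
Proof. rewrite pow_INR; simpl; f_equal; lra. Qed.

Lemma dy_le j m k n : (j * 2 ^ n <= k * 2 ^ m)%nat -> INR j / 2 ^ m <= INR k / 2 ^ n.
Proof.
  intros H. apply le_INR in H. rewrite !mult_INR, !INR_pow2 in H.
  pose proof (pow2_pos m). pose proof (pow2_pos n).
  replace (INR j / 2 ^ m) with (INR j * 2 ^ n * / (2 ^ m * 2 ^ n)) by (field; lra).
  replace (INR k / 2 ^ n) with (INR k * 2 ^ m * / (2 ^ m * 2 ^ n)) by (field; lra).
  apply Rmult_le_compat_r; auto.
  left; apply Rinv_0_lt_compat, Rmult_lt_0_compat; auto.
Qed.

Definition Ex (x : X) (t : R) : Prop :=
  t = 0 \/ exists n k, (k <= 2 ^ n)%nat /\ t = INR k / 2 ^ n /\ ~ Kc n k x.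

Lemma Ex_bound x : bound (Ex x).
Proof.
  exists 1. intros t [->|[n [k [Hk [-> _]]]]]; [lra|].
  pose proof (pow2_pos n). apply le_INR in Hk. rewrite INR_pow2 in Hk.
  apply (Rmult_le_reg_r (2 ^ n)); auto. unfold Rdiv. rewrite Rmult_assoc, Rinv_l; lra.
Qed.

Definition gU (x : X) : R := proj1_sig (completeness (Ex x) (Ex_bound x) (ex_intro _ 0 (or_introl eq_refl))).

Lemma gU_lub x : is_lub (Ex x) (gU x).
Proof. unfold gU. destruct completeness; auto. Qed.

Lemma gU_ge0 x : 0 <= gU x.
Proof. destruct (gU_lub x) as [H _]. apply H; left; auto. Qed.

Lemma gU_le1 x : gU x <= 1.
Proof. destruct (gU_lub x) as [_ H]. apply H. destruct (Ex_bound x) as [b Hb].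
  intros t [->|[n [k [Hk [-> _]]]]]; [lra|].
  pose proof (pow2_pos n). apply le_INR in Hk. rewrite INR_pow2 in Hk.
  apply (Rmult_le_reg_r (2 ^ n)); auto. unfold Rdiv. rewrite Rmult_assoc, Rinv_l; lra.
Qed.

Lemma gU_L x n k : (k <= 2 ^ n)%nat -> ~ Kc n k x -> INR k / 2 ^ n <= gU x.
Proof. intros Hk Hx. destruct (gU_lub x) as [H _]. apply H; right; exists n, k; auto. Qed.

Lemma gU_U x n k : (k <= 2 ^ n)%nat -> Op n k x -> gU x <= INR k / 2 ^ n.
Proof.
  intros Hk Hx. destruct (gU_lub x) as [_ H]. apply H.
  intros t [->|[m [j [Hj [-> Hnot]]]]].
  - apply Rmult_le_pos; [apply pos_INR | left; apply Rinv_0_lt_compat, pow2_pos].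
  - destruct (Compare_dec.le_lt_dec (k * 2 ^ m) (j * 2 ^ n)) as [Hle|Hlt].
    + exfalso; apply Hnot; apply (cmp n k m j); auto.
    + apply dy_le; lia.
Qed.

Lemma INR_le_pow2 n : INR n <= 2 ^ n.
Proof.
  induction n as [|n IH]; [simpl; lra|]. rewrite S_INR.
  assert (1 <= 2 ^ n) by (apply pow_R1_Rle; lra).
  change (2 ^ S n) with (2 * 2 ^ n). lra.
Qed.

Lemma gU_cont : contR X gU.
Proof.
  intros x eps Heps.
  destruct (INR_unbounded (2 / eps)) as [n Hn].
  assert (Hn2 : 2 / 2 ^ n < eps).
  { pose proof (INR_le_pow2 n). pose proof (pow2_pos n).
    apply (Rmult_lt_reg_r (2 ^ n)); auto. unfold Rdiv. rewrite Rmult_assoc, Rinv_l by lra.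
    apply (Rmult_lt_reg_r (/ eps)). apply Rinv_0_lt_compat; auto.
    replace (eps * 2 ^ n * / eps) with (2 ^ n) by (field; lra). lra. }
  destruct (exists_least (fun k => ((k <= 2 ^ n)%nat /\ Op n k x) \/ k = S (2 ^ n)) (S (2 ^ n)) (or_intror eq_refl))
    as [k [Hk Hmin]].
  destruct (Inv_all n) as [I1 I2].
  set (N1 := fun z => if Compare_dec.le_dec k (2 ^ n) then Op n k z else True).
  set (N2 := fun z => if Compare_dec.le_dec 2 k then ~ Kc n (k - 2) z else True).
  assert (Hb : forall z, N1 z -> N2 z -> (INR k - 2) / 2 ^ n <= gU z <= INR k / 2 ^ n).
  { intros z Hz1 Hz2. pose proof (pow2_pos n). split.
    - unfold N2 in Hz2. destruct (Compare_dec.le_dec 2 k) as [H2|H2].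
      + destruct Hk as [[Hk1 _]|Hk1].
        * replace (INR k - 2) with (INR (k - 2)) by (rewrite minus_INR by lia; simpl; ring).
          apply gU_L; auto; lia.
        * replace (INR k - 2) with (INR (k - 2)) by (rewrite minus_INR by lia; simpl; ring).
          apply gU_L; auto; lia.
      + apply Rle_trans with 0; [|apply gU_ge0].
        assert (INR k <= 1). { replace 1 with (INR 1) by reflexivity. apply le_INR; lia. }
        assert (0 < / 2 ^ n) by (apply Rinv_0_lt_compat; auto). unfold Rdiv. nra.
    - unfold N1 in Hz1. destruct (Compare_dec.le_dec k (2 ^ n)) as [H1|H1].
      + apply gU_U; auto.
      + apply Rle_trans with 1; [apply gU_le1|].
        destruct Hk as [[Hk1 _]|Hk1]; [lia|]. subst k.
        rewrite S_INR, INR_pow2. apply (Rmult_le_reg_r (2 ^ n)); auto.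
        unfold Rdiv. rewrite Rmult_assoc, Rinv_l; lra. }
  assert (HxN : N1 x /\ N2 x).
  { split.
    - unfold N1. destruct (Compare_dec.le_dec k (2 ^ n)); auto. destruct Hk as [[_ H]|H]; auto; lia.
    - unfold N2. destruct (Compare_dec.le_dec 2 k) as [H2|H2]; auto.
      intros HK. apply (Hmin (k - 1)%nat); [lia|]. left. split.
      + destruct Hk as [[Hk1 _]|Hk1]; lia.
      + replace (k - 1)%nat with (S (k - 2)) by lia. apply I2; auto.
        destruct Hk as [[Hk1 _]|Hk1]; lia. }
  exists (fun z => N1 z /\ N2 z). split; [|split; auto].
  - apply open_inter.
    + unfold N1. destruct (Compare_dec.le_dec k (2 ^ n)) as [H1|H1]; [apply I1; auto | apply open_full].
    + unfold N2. destruct (Compare_dec.le_dec 2 k) as [H2|H2]; [|apply open_full].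
      destruct Hk as [[Hk1 _]|Hk1]; destruct (I1 (k - 2)%nat ltac:(lia)) as [_ [Hc _]]; exact Hc.
  - intros z [Hz1 Hz2]. destruct HxN as [Hx1 Hx2].
    pose proof (Hb z Hz1 Hz2). pose proof (Hb x Hx1 Hx2).
    apply Rabs_def1.
    + apply Rle_lt_trans with (2 / 2 ^ n); auto. unfold Rdiv in *. lra.
    + apply Rlt_le_trans with (- (2 / 2 ^ n)); [lra|]. unfold Rdiv in *. lra.
Qed.

Lemma urysohn_point : exists r : X -> R, contR X r /\ r x0 = 1 /\ forall x, ~ V x -> r x = 0.
Proof.
  exists (fun x => 1 - gU x). split; [|split].
  - intros x eps Heps. destruct (gU_cont x eps Heps) as [U [h1 [h2 h3]]].
    exists U; repeat split; auto. intros z Hz. specialize (h3 z Hz).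
    replace (1 - gU z - (1 - gU x)) with (- (gU z - gU x)) by ring. rewrite Rabs_Ropp; auto.
  - assert (gU x0 <= 0).
    { replace 0 with (INR 0 / 2 ^ 0) by (simpl; field). apply gU_U; [simpl; lia|].
      unfold Op; simpl. destruct p0_spec as [_ [_ [h _]]]. apply h; auto. }
    pose proof (gU_ge0 x0). lra.
  - intros x Hx. assert (1 <= gU x).
    { replace 1 with (INR 1 / 2 ^ 0) by (simpl; field). apply gU_L; [simpl; lia|].
      unfold Kc; simpl. destruct p1_spec as [_ [_ [_ [_ h]]]]. intros Hk; apply Hx, h; auto. }
    pose proof (gU_le1 x). lra.
Qed.
End Urysohn.

Definition Csub (a b : Cplx) := Cadd a (Copp b).

Lemma Ceq (z w : Cplx) : Cre z = Cre w -> Cim z = Cim w -> z = w.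
Proof. destruct z, w; simpl; intros -> ->; reflexivity. Qed.

Lemma Cnorm_ge_re z : Rabs (Cre z) <= Cnorm z.
Proof.
  unfold Cnorm. rewrite <- sqrt_Rsqr_abs. apply sqrt_le_1_alt. unfold Rsqr.
  pose proof (Rle_0_sqr (Cim z)). unfold Rsqr in H. lra.
Qed.

Lemma Cnorm_ge_im z : Rabs (Cim z) <= Cnorm z.
Proof.
  unfold Cnorm. rewrite <- sqrt_Rsqr_abs. apply sqrt_le_1_alt. unfold Rsqr.
  pose proof (Rle_0_sqr (Cre z)). unfold Rsqr in H. lra.
Qed.

Lemma Cnorm_le z : Cnorm z <= Rabs (Cre z) + Rabs (Cim z).
Proof.
  unfold Cnorm. pose proof (Rabs_pos (Cre z)). pose proof (Rabs_pos (Cim z)).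
  rewrite <- (sqrt_Rsqr (Rabs (Cre z) + Rabs (Cim z))) by lra.
  apply sqrt_le_1_alt. unfold Rsqr.
  assert (Ha : Cre z * Cre z = Rabs (Cre z) * Rabs (Cre z))
    by (rewrite <- Rabs_mult; rewrite Rabs_pos_eq; nra).
  assert (Hb : Cim z * Cim z = Rabs (Cim z) * Rabs (Cim z))
    by (rewrite <- Rabs_mult; rewrite Rabs_pos_eq; nra).
  rewrite Ha, Hb. nra.
Qed.

Lemma Cnorm_pos z : 0 <= Cnorm z.
Proof. unfold Cnorm; apply sqrt_pos. Qed.

Lemma Cnorm_C0 : Cnorm C0 = 0.
Proof. unfold Cnorm, C0; simpl. replace (0*0+0*0) with 0 by ring. apply sqrt_0. Qed.

Lemma Cnorm_m1 : Cnorm (mkC (-1) 0) = 1.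
Proof. unfold Cnorm; simpl. replace (-1 * -1 + 0 * 0) with 1 by ring. apply sqrt_1. Qed.

Section LCSlemmas.
Variable E : LCS.

Lemma v0_add x : vadd E (v0 E) x = x.
Proof. rewrite vaddC, vadd0; auto. Qed.

Lemma vsub_add a b : vadd E (vsub E a b) b = a.
Proof. unfold vsub. rewrite <- vaddA, (vaddC E (vopp E b) b), vaddN, vadd0; auto. Qed.

Lemma vsub_eq0 a b : vsub E a b = v0 E -> a = b.
Proof. intros H. rewrite <- (vsub_add a b), H, v0_add; auto. Qed.

Lemma vsub_self a : vsub E a a = v0 E.
Proof. apply vaddN. Qed.

Lemma vsub_cancel a b c : vsub E a c = vsub E b c -> a = b.
Proof. intros H. rewrite <- (vsub_add a c), <- (vsub_add b c), H; auto. Qed.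

Lemma idem0 z : vadd E z z = z -> z = v0 E.
Proof.
  intros H. rewrite <- (vaddN E z). rewrite <- H at 2. rewrite <- vaddA, vaddN, vadd0. auto.
Qed.

Lemma vscale_C0 x : vscale E C0 x = v0 E.
Proof.
  apply idem0. rewrite <- vscaleDl. f_equal. apply Ceq; simpl; ring.
Qed.

Lemma vscale_v0 c : vscale E c (v0 E) = v0 E.
Proof.
  apply idem0. rewrite <- vscaleDr, vadd0. auto.
Qed.

Lemma vsub_scale a b x : vsub E (vscale E a x) (vscale E b x) = vscale E (Csub a b) x.
Proof.
  assert (Ha : a = Cadd (Csub a b) b) by (apply Ceq; simpl; ring).
  rewrite Ha at 1. rewrite vscaleDl. unfold vsub.
  rewrite <- vaddA, vaddN, vadd0. auto.
Qed.

Lemma inv_unique p x : vadd E p x = v0 E -> p = vopp E x.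
Proof.
  intros H. rewrite <- (vadd0 E p), <- (vaddN E x), vaddA, H, v0_add. auto.
Qed.

Lemma vopp_scale x : vopp E x = vscale E (mkC (-1) 0) x.
Proof.
  symmetry. apply inv_unique. rewrite <- (vscale1 E x) at 2. rewrite <- vscaleDl.
  replace (Cadd (mkC (-1) 0) C1) with C0 by (apply Ceq; simpl; ring). apply vscale_C0.
Qed.

Lemma sn_opp i x : sn E i (vopp E x) = sn E i x.
Proof. rewrite vopp_scale, sn_homog, Cnorm_m1; ring. Qed.

Lemma sn_v0 i : sn E i (v0 E) = 0.
Proof. rewrite <- (vscale_C0 (v0 E)), sn_homog, Cnorm_C0; ring. Qed.

Lemma sn_nonneg i x : 0 <= sn E i x.
Proof.
  pose proof (sn_triangle E i x (vopp E x)). rewrite vaddN, sn_v0, sn_opp in H. lra.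
Qed.

Lemma vsub_tri w v x : vsub E w x = vadd E (vsub E w v) (vsub E v x).
Proof.
  unfold vsub. rewrite <- vaddA. f_equal. rewrite vaddA, (vaddC E (vopp E v) v), vaddN, v0_add. auto.
Qed.

Lemma sn_sub_tri i w v x : sn E i (vsub E w x) <= sn E i (vsub E w v) + sn E i (vsub E v x).
Proof. rewrite (vsub_tri w v x). apply sn_triangle. Qed.

Lemma sep_pos x : x <> v0 E -> exists i, 0 < sn E i x.
Proof.
  intros Hx. apply NNPP. intros H. apply Hx, sn_separating. intros i.
  pose proof (sn_nonneg i x). destruct (Req_dec (sn E i x) 0); auto.
  exfalso; apply H; exists i; lra.
Qed.

Lemma scale_cancel c x : x <> v0 E -> vscale E c x = v0 E -> c = C0.
Proof.
  intros Hx H. apply NNPP; intros Hc.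
  set (d := Cre c * Cre c + Cim c * Cim c).
  assert (Hd : d <> 0).
  { intros Hd0. apply Hc. unfold d in Hd0. apply Ceq; simpl; nra. }
  set (ci := mkC (Cre c / d) (- Cim c / d)).
  apply Hx. rewrite <- (vscale1 E x).
  replace C1 with (Cmul ci c) by (apply Ceq; unfold ci, d in *; simpl; field; auto).
  rewrite <- vscaleA, H, vscale_v0. auto.
Qed.

Lemma scale_inj a b x : x <> v0 E -> vscale E a x = vscale E b x -> a = b.
Proof.
  intros Hx H. assert (Csub a b = C0).
  { apply (scale_cancel _ x Hx). rewrite <- vsub_scale, H. apply vsub_self. }
  pose proof (f_equal Cre H0) as H1. pose proof (f_equal Cim H0) as H2. simpl in H1, H2.
  apply Ceq; lra.
Qed.

Lemma open_ball i c r : E_open E (fun v => sn E i (vsub E v c) < r).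
Proof.
  intros x Hx. exists (i :: nil), (r - sn E i (vsub E x c)). split; [lra|].
  intros y Hy. specialize (Hy i (or_introl eq_refl)).
  pose proof (sn_sub_tri i y x c). lra.
Qed.

Lemma open_nonzero : E_open E (fun v => v <> v0 E).
Proof.
  intros x Hx. destruct (sep_pos x Hx) as [i Hi].
  exists (i :: nil), (sn E i x). split; auto.
  intros y Hy Hy0. specialize (Hy i (or_introl eq_refl)). subst y.
  unfold vsub in Hy. rewrite v0_add, sn_opp in Hy. lra.
Qed.
End LCSlemmas.

Lemma contR_const (X : TopSpace) (c : R) : contR X (fun _ => c).
Proof. intros x eps He. exists (fun _ => True); repeat split; auto using open_full.
  intros; rewrite Rminus_diag, Rabs_R0; auto. Qed.

Lemma contR_plus (X : TopSpace) f g : contR X f -> contR X g -> contR X (fun x => f x + g x).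
Proof.
  intros Hf Hg x eps He.
  destruct (Hf x (eps/2) ltac:(lra)) as [U [h1 [h2 h3]]].
  destruct (Hg x (eps/2) ltac:(lra)) as [W [k1 [k2 k3]]].
  exists (fun z => U z /\ W z); repeat split; auto using open_inter.
  intros z [Uz Wz]. specialize (h3 z Uz); specialize (k3 z Wz).
  replace (f z + g z - (f x + g x)) with ((f z - f x) + (g z - g x)) by ring.
  pose proof (Rabs_triang (f z - f x) (g z - g x)). lra.
Qed.

Lemma contR_abs (X : TopSpace) f : contR X f -> contR X (fun x => Rabs (f x)).
Proof.
  intros Hf x eps He. destruct (Hf x eps He) as [U [h1 [h2 h3]]].
  exists U; repeat split; auto. intros z Uz. specialize (h3 z Uz).
  pose proof (Rabs_triang_inv2 (f z) (f x)). lra.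
Qed.

Lemma contR_neq_open (X : TopSpace) f a : contR X f -> is_open X (fun x => f x <> a).
Proof.
  intros Hf. apply open_nbhd. intros x Hx.
  assert (He : 0 < Rabs (f x - a)) by (apply Rabs_pos_lt; lra).
  destruct (Hf x _ He) as [U [h1 [h2 h3]]]. exists U; repeat split; auto.
  intros z Uz Hz. specialize (h3 z Uz). subst a.
  rewrite <- Rabs_Ropp in h3. replace (- (f z - f x)) with (f x - f z) in h3 by ring. lra.
Qed.

Section Main.
Variables X Y : TopSpace.
Variable E : LCS.
Variable T : CXE X E -> CXE Y E.
Hypothesis hran : forall (F G : CXE X E) (y : Y), exists x : X,
      vsub E (proj1_sig (T F) y) (proj1_sig (T G) y)
      = vsub E (proj1_sig F x) (proj1_sig G x).
Hypothesis hzero : forall h : contE X E (fun _ => v0 E),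
      proj1_sig (T (exist _ (fun _ => v0 E) h)) = (fun _ => v0 E).
Variable u : vec E.
Hypothesis hu : u <> v0 E.

Definition CE (f : X -> Cplx) := contE X E (fun x => vscale E (f x) u).
Definition Fof (f : X -> Cplx) (hf : CE f) : CXE X E :=
  exist (contE X E) (fun x => vscale E (f x) u) hf.

Lemma contE_const (c : vec E) : contE X E (fun _ => c).
Proof.
  intros W HW. destruct (classic (W c)) as [Hc|Hc].
  - apply (open_ext X (fun _ => True)); [intros; split; auto | apply open_full].
  - apply (open_ext X (fun _ => False)); [intros; split; [intros []|auto] | apply open_empty].
Qed.

Lemma T_ext (F G : CXE X E) : proj1_sig F = proj1_sig G -> proj1_sig (T F) = proj1_sig (T G).
Proof.
  intros H. apply functional_extensionality. intros y.
  destruct (hran F G y) as [x Hx]. rewrite H, vsub_self in Hx. apply vsub_eq0; auto.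
Qed.

Lemma T_range (F : CXE X E) y : exists x, proj1_sig (T F) y = proj1_sig F x.
Proof.
  destruct (hran F (exist _ (fun _ => v0 E) (contE_const (v0 E))) y) as [x Hx].
  rewrite hzero in Hx. exists x. apply (vsub_cancel E _ _ (v0 E)); auto.
Qed.

Definition s (y : Y) (f : X -> Cplx) : Cplx :=
  epsilon (inhabits C0) (fun c => exists hf : CE f, proj1_sig (T (Fof f hf)) y = vscale E c u).

Lemma s_spec y f (hf : CE f) : proj1_sig (T (Fof f hf)) y = vscale E (s y f) u.
Proof.
  assert (Hex : exists c, exists hf : CE f, proj1_sig (T (Fof f hf)) y = vscale E c u).
  { destruct (T_range (Fof f hf) y) as [x Hx]. exists (f x), hf. exact Hx. }
  pose proof (epsilon_spec (inhabits C0) _ Hex) as [hf' H]. fold (s y f) in H.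
  rewrite <- H. rewrite (T_ext (Fof f hf) (Fof f hf')); reflexivity.
Qed.

Lemma s_pt y f : CE f -> exists x, s y f = f x.
Proof.
  intros hf. destruct (T_range (Fof f hf) y) as [x Hx]. rewrite s_spec in Hx.
  exists x. apply (scale_inj E _ _ u hu Hx).
Qed.

Lemma s_range y f g : CE f -> CE g -> exists x, Csub (s y f) (s y g) = Csub (f x) (g x).
Proof.
  intros hf hg. destruct (hran (Fof f hf) (Fof g hg) y) as [x Hx].
  rewrite !s_spec in Hx. simpl in Hx. rewrite !vsub_scale in Hx.
  exists x. apply (scale_inj E _ _ u hu Hx).
Qed.

Lemma CE_to_R f : CE f -> contR X (fun x => Cre (f x)) /\ contR X (fun x => Cim (f x)).
Proof.
  intros hf. destruct (sep_pos E u hu) as [i Hi].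
  assert (key : forall x eps, 0 < eps -> exists U, is_open X U /\ U x /\
            forall z, U z -> Cnorm (Csub (f z) (f x)) < eps).
  { intros x eps He.
    exists (fun z => sn E i (vsub E (vscale E (f z) u) (vscale E (f x) u)) < eps * sn E i u).
    split; [|split].
    - apply (hf (fun v => sn E i (vsub E v (vscale E (f x) u)) < eps * sn E i u)).
      apply open_ball.
    - rewrite vsub_self, sn_v0. nra.
    - intros z Hz. rewrite vsub_scale, sn_homog in Hz. nra. }
  split; intros x eps He; destruct (key x eps He) as [U [h1 [h2 h3]]];
    exists U; repeat split; auto; intros z Hz; specialize (h3 z Hz).
  - pose proof (Cnorm_ge_re (Csub (f z) (f x))). unfold Csub in *. simpl in H. unfold Rminus. lra.
  - pose proof (Cnorm_ge_im (Csub (f z) (f x))). unfold Csub in *. simpl in H. unfold Rminus. lra.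
Qed.

Fixpoint sumsn (l : list (sn_index E)) : R :=
  match l with nil => 0 | i :: l' => sn E i u + sumsn l' end.

Lemma sumsn_ge l i : In i l -> sn E i u <= sumsn l.
Proof.
  induction l as [|j l IH]; simpl; [intros []|].
  assert (0 <= sumsn l).
  { clear IH. induction l; simpl; [lra|]. pose proof (sn_nonneg E a u). lra. }
  intros [->|Hi]; [lra|]. pose proof (sn_nonneg E j u). specialize (IH Hi). lra.
Qed.

Lemma R_to_CE f : contR X (fun x => Cre (f x)) -> contR X (fun x => Cim (f x)) -> CE f.
Proof.
  intros h1 h2 W HW. apply open_nbhd. intros x Wx.
  destruct (HW _ Wx) as [l [eps [He Hl]]].
  set (M := 1 + sumsn l).
  assert (HM : forall i, In i l -> sn E i u < M).
  { intros i Hi. pose proof (sumsn_ge l i Hi). unfold M; lra. }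
  assert (HM0 : 0 < M). { unfold M. assert (0 <= sumsn l).
    { clear. induction l; simpl; [lra|]. pose proof (sn_nonneg E a u). lra. } lra. }
  set (d := eps / M / 2).
  assert (Hd : 0 < d) by (unfold d; apply Rmult_lt_0_compat; [apply Rdiv_lt_0_compat|]; lra).
  destruct (h1 x d Hd) as [U1 [a1 [a2 a3]]].
  destruct (h2 x d Hd) as [U2 [b1 [b2 b3]]].
  exists (fun z => U1 z /\ U2 z); repeat split; auto using open_inter.
  intros z [z1 z2]. apply Hl. intros i Hi.
  rewrite vsub_scale, sn_homog.
  specialize (a3 z z1); specialize (b3 z z2).
  pose proof (Cnorm_le (Csub (f z) (f x))). unfold Csub in H |- *. simpl in H.
  unfold Rminus in a3, b3.
  pose proof (HM i Hi). pose proof (sn_nonneg E i u).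
  pose proof (Cnorm_pos (Cadd (f z) (Copp (f x)))).
  assert (Cnorm (Cadd (f z) (Copp (f x))) < eps / M).
  { unfold d in *. lra. }
  apply Rle_lt_trans with (Cnorm (Cadd (f z) (Copp (f x))) * M).
  - apply Rmult_le_compat_l; lra.
  - apply (Rmult_lt_compat_r M) in H3; auto. unfold Rdiv in H3.
    rewrite Rmult_assoc, Rinv_l in H3; lra.
Qed.

Definition cf (h k : X -> R) : X -> Cplx := fun x => mkC (h x) (k x).
Definition zr : X -> R := fun _ => 0.

Lemma CEcf h k : contR X h -> contR X k -> CE (cf h k).
Proof. intros; apply R_to_CE; auto. Qed.

Definition sR y h := Cre (s y (cf h zr)).

Section Fixy.
Variable y : Y.

Lemma F5 h : contR X h -> exists x, sR y h = h x.
Proof.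
  intros Hh. destruct (s_pt y (cf h zr) (CEcf h zr Hh (contR_const X 0))) as [x Hx].
  exists x. unfold sR; rewrite Hx; reflexivity.
Qed.

Lemma F1 h : contR X h -> s y (cf h zr) = mkC (sR y h) 0.
Proof.
  intros Hh. destruct (s_pt y (cf h zr) (CEcf h zr Hh (contR_const X 0))) as [x Hx].
  apply Ceq; unfold sR; auto. rewrite Hx; reflexivity.
Qed.

Lemma F2 k : contR X k -> s y (cf zr k) = mkC 0 (sR y k).
Proof.
  intros Hk. pose proof (contR_const X 0) as H0.
  destruct (s_pt y (cf zr k) (CEcf zr k H0 Hk)) as [x Hx].
  destruct (s_range y (cf zr k) (cf k zr) (CEcf zr k H0 Hk) (CEcf k zr Hk H0)) as [x' Hx'].
  rewrite (F1 k Hk) in Hx'.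
  pose proof (f_equal Cre Hx') as e1. pose proof (f_equal Cim Hx') as e2.
  pose proof (f_equal Cre Hx) as e3.
  unfold cf, zr, Csub in *; simpl in *. apply Ceq; simpl; lra.
Qed.

Lemma F3 h k : contR X h -> contR X k -> s y (cf h k) = mkC (sR y h) (sR y k).
Proof.
  intros Hh Hk. pose proof (contR_const X 0) as H0.
  destruct (s_range y (cf h k) (cf h zr) (CEcf h k Hh Hk) (CEcf h zr Hh H0)) as [x Hx].
  destruct (s_range y (cf h k) (cf zr k) (CEcf h k Hh Hk) (CEcf zr k H0 Hk)) as [x' Hx'].
  rewrite (F1 h Hh) in Hx. rewrite (F2 k Hk) in Hx'.
  pose proof (f_equal Cre Hx) as e1. pose proof (f_equal Cim Hx') as e2.
  unfold cf, zr, Csub in *; simpl in *. apply Ceq; simpl; lra.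
Qed.

Lemma F4 h a : contR X h -> sR y (fun x => h x + - a) = sR y h - a.
Proof.
  intros Hh. pose proof (contR_const X 0) as H0.
  assert (Hh' : contR X (fun x => h x + - a)) by (apply contR_plus; auto using contR_const).
  destruct (s_range y (cf (fun x => h x + - a) zr) (cf h zr) (CEcf _ zr Hh' H0) (CEcf h zr Hh H0)) as [x Hx].
  pose proof (f_equal Cre Hx) as e1. unfold sR, cf, zr, Csub in *; simpl in *. lra.
Qed.

Lemma Lz h k : contR X h -> contR X k -> sR y h = 0 -> (forall x, h x = 0 -> k x = 0) -> sR y k = 0.
Proof.
  intros Hh Hk H0 Hz. destruct (s_pt y (cf h k) (CEcf h k Hh Hk)) as [x Hx].
  rewrite (F3 h k Hh Hk) in Hx. pose proof (f_equal Cre Hx) as e1. pose proof (f_equal Cim Hx) as e2.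
  unfold cf in *; simpl in *. rewrite H0 in e1. rewrite e2. apply Hz; auto.
Qed.

Lemma Az h1 h2 : contR X h1 -> contR X h2 -> sR y h1 = 0 -> sR y h2 = 0 ->
  sR y (fun x => h1 x + h2 x) = 0.
Proof.
  intros H1 H2 e1 e2. pose proof (contR_const X 0) as H0.
  assert (H12 : contR X (fun x => h1 x + h2 x)) by (apply contR_plus; auto).
  destruct (s_range y (cf (fun x => h1 x + h2 x) zr) (cf h1 h2) (CEcf _ zr H12 H0) (CEcf h1 h2 H1 H2)) as [x Hx].
  rewrite (F3 h1 h2 H1 H2), (F1 _ H12) in Hx.
  pose proof (f_equal Cre Hx) as c1. pose proof (f_equal Cim Hx) as c2.
  unfold cf, zr, Csub in *; simpl in *. lra.
Qed.
End Fixy.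

Definition Igood := {h : X -> R | contR X h}.

Lemma FIP (hXc : compact_space X) y : exists x, forall h, contR X h -> h x = sR y h.
Proof.
  apply NNPP. intros Hno.
  set (Uc := fun (i : Igood) (x : X) => proj1_sig i x <> sR y (proj1_sig i)).
  destruct (hXc Igood Uc) as [l Hl].
  - intros [h Hh]. unfold Uc; simpl. apply contR_neq_open; auto.
  - intros x. apply NNPP. intros Hx. apply Hno. exists x. intros h Hh.
    apply NNPP. intros Hne. apply Hx. exists (exist _ h Hh). exact Hne.
  - assert (Hbuild : forall ll : list Igood, exists H, contR X H /\ (forall x, 0 <= H x) /\
        sR y H = 0 /\ forall x, H x = 0 -> forall i, In i ll -> proj1_sig i x = sR y (proj1_sig i)).
    { clear Hl. induction ll as [|[h Hh] ll IH].
      - exists zr. split; [apply contR_const|]. split; [intros; unfold zr; lra|]. split.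
        + destruct (F5 y zr (contR_const X 0)) as [x Hx]. rewrite Hx; reflexivity.
        + intros x _ i [].
      - destruct IH as [H [c1 [c2 [c3 c4]]]].
        set (a := sR y h).
        set (g := fun x => Rabs (h x + - a)).
        assert (Hg0 : contR X (fun x => h x + - a)) by (apply contR_plus; auto using contR_const).
        assert (Hg : contR X g) by (apply contR_abs; auto).
        assert (sg : sR y g = 0).
        { apply (Lz y (fun x => h x + - a)); auto.
          - rewrite F4; auto. unfold a; ring.
          - intros x Hx; unfold g; rewrite Hx; apply Rabs_R0. }
        exists (fun x => H x + g x). split; [apply contR_plus; auto|]. split.
        + intros x. pose proof (c2 x). pose proof (Rabs_pos (h x + - a)). unfold g; lra.
        + split; [apply Az; auto|].
          intros x Hx i [<-|Hi]; simpl.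
          * pose proof (c2 x). pose proof (Rabs_pos (h x + - a)). unfold g in *.
            assert (Rabs (h x + - a) = 0) by lra.
            destruct (Req_dec (h x + - a) 0) as [Hz|Hz]; [fold a; lra|].
            exfalso. apply (Rabs_no_R0 _ Hz); auto.
          * apply c4; auto. pose proof (c2 x). pose proof (Rabs_pos (h x + - a)). unfold g in *. lra. }
    destruct (Hbuild l) as [H [c1 [c2 [c3 c4]]]].
    destruct (F5 y H c1) as [x Hx].
    destruct (Hl x) as [i [Hi Hu]]. apply Hu. apply c4; auto. lra.
Qed.


Lemma main_sec (hXne : inhabited X) (hXc : compact_space X) (hXh : hausdorff_space X) :
  exists phi : Y -> X, contXY X Y phi /\
      forall (f : X -> Cplx), contC X f ->
        forall (hfu : contE X E (fun x => vscale E (f x) u)) (y : Y),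
          proj1_sig (T (exist _ (fun x => vscale E (f x) u) hfu)) y
          = vscale E (f (phi y)) u.
Proof.
  set (phi := fun y => epsilon hXne (fun x => forall h, contR X h -> h x = sR y h)).
  assert (Hphi : forall y h, contR X h -> h (phi y) = sR y h).
  { intros y. unfold phi. apply (epsilon_spec hXne (fun x => forall h, contR X h -> h x = sR y h)).
    apply FIP; auto. }
  exists phi. split.
  - intros V HV. apply open_nbhd. intros y0 Hy0.
    destruct (urysohn_point X hXc hXh (phi y0) V HV Hy0) as [r [hr [r1 r0]]].
    pose (hf := CEcf r zr hr (contR_const X 0)).
    assert (key : forall y, proj1_sig (T (Fof (cf r zr) hf)) y = vscale E (mkC (r (phi y)) 0) u).
    { intros y. rewrite s_spec, F1 by auto. rewrite Hphi by auto. reflexivity. }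
    exists (fun y => proj1_sig (T (Fof (cf r zr) hf)) y <> v0 E). split; [|split].
    + apply (proj2_sig (T (Fof (cf r zr) hf)) (fun v => v <> v0 E)). apply open_nonzero.
    + rewrite key, r1. change (mkC 1 0) with C1. rewrite vscale1. exact hu.
    + intros z Hz. apply NNPP. intros nV. apply Hz. rewrite key, (r0 _ nV).
      change (mkC 0 0) with C0. apply vscale_C0.
  - intros f _ hfu y. change (proj1_sig (T (Fof f hfu)) y = vscale E (f (phi y)) u).
    rewrite s_spec. f_equal.
    destruct (CE_to_R f hfu) as [h1 h2].
    assert (Hf : f = cf (fun x => Cre (f x)) (fun x => Cim (f x))).
    { apply functional_extensionality; intros x; unfold cf; destruct (f x); reflexivity. }
    transitivity (s y (cf (fun x => Cre (f x)) (fun x => Cim (f x)))).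
    + f_equal; exact Hf.
    + rewrite F3 by auto. rewrite <- !Hphi by auto. destruct (f (phi y)); reflexivity.
Qed.
End Main.

Theorem lemma4p3 (X Y : TopSpace) (E : LCS)
  (hXne : inhabited (pt X)) (hYne : inhabited (pt Y))
  (hXc : compact_space X) (hYc : compact_space Y)
  (hXh : hausdorff_space X) (hYh : hausdorff_space Y)
  (hE : exists e : vec E, e <> v0 E)
  (T : CXE X E -> CXE Y E)
  (hran : forall (F G : CXE X E) (y : Y), exists x : X,
      vsub E (proj1_sig (T F) y) (proj1_sig (T G) y)
      = vsub E (proj1_sig F x) (proj1_sig G x))
  (hzero : forall h : contE X E (fun _ => v0 E),
      proj1_sig (T (exist _ (fun _ => v0 E) h)) = (fun _ => v0 E)) :
  forall u : vec E, u <> v0 E ->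
    exists phi : Y -> X, contXY X Y phi /\
      forall (f : X -> Cplx), contC X f ->
        forall (hfu : contE X E (fun x => vscale E (f x) u)) (y : Y),
          proj1_sig (T (exist _ (fun x => vscale E (f x) u) hfu)) y
          = vscale E (f (phi y)) u.
Proof.
  intros u hu. apply (main_sec X Y E T hran hzero u hu hXne hXc hXh).
Qed.
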